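(* Let $R$ be a reduced commutative ring and let $I$ be a pure ideal of $R$. Then $R$ is Gaussian if and only if $R\bowtie I$ is Gaussian.
   Context: All rings are commutative with identity. For an ideal $I$ of $R$, $R\bowtie I=\{(r,r+i): r\in R,\ i\in I\}$ is a subring of $R\times R$ (componentwise operations, unit $(1,1)$). An ideal $I$ is pure if $R/I$ is a flat $R$-module. A ring $A$ is Gaussian if $c(fg)=c(f)c(g)$ for all $f,g\in A[X]$, where $c(f)$ is the ideal of $A$ generated by the coefficients of $f$. *)

(* Defs.v *)
From HB Require Import structures.
From mathcomp Require Import all_boot all_order all_algebra.
From mathcomp Require Import ring.
Set Implicit Arguments. Unset Strict Implicit. Unset Printing Implicit Defensive.
Import GRing.Theory.
Local Open Scope ring_scope.

Definition is_ideal (R : comNzRingType) (I : {pred R}) : Prop :=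
  [/\ 0 \in I,
      (forall x y, x \in I -> y \in I -> x - y \in I) &
      (forall r x, x \in I -> r * x \in I)].

Definition reduced (R : comNzRingType) : Prop :=
  forall (x : R) (n : nat), x ^+ n = 0 -> x = 0.

Definition ideal_smul (R : comNzRingType) (I : {pred R}) (M : lmodType R)
    (P : {pred M}) (m : M) : Prop :=
  exists (n : nat) (a : 'I_n -> R) (x : 'I_n -> M),
    (forall k, a k \in I /\ x k \in P) /\ m = \sum_(k < n) a k *: x k.

Definition is_submodule (R : comNzRingType) (M : lmodType R) (N : {pred M}) : Prop :=
  [/\ 0 \in N,
      (forall x y, x \in N -> y \in N -> x - y \in N) &
      (forall (r : R) x, x \in N -> r *: x \in N)].

(* R/I is a flat R-module: for every R-module M and submodule N <= M, the map
   N (x) R/I -> M (x) R/I is injective.  Using the canonical identification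
   P (x)_R R/I = P / I P, this says N /\ I M <= I N. *)
Definition flat_quotient (R : comNzRingType) (I : {pred R}) : Prop :=
  forall (M : lmodType R) (N : {pred M}), is_submodule N ->
    forall m : M, m \in N -> ideal_smul I [pred x : M | true] m ->
      ideal_smul I N m.

Definition pure_ideal (R : comNzRingType) (I : {pred R}) : Prop :=
  is_ideal I /\ flat_quotient I.

Definition content (A : comNzRingType) (f : {poly A}) (a : A) : Prop :=
  exists u : 'I_(size f) -> A, a = \sum_(i < size f) u i * f`_i.

Definition ideal_prod (A : comNzRingType) (J K : A -> Prop) (a : A) : Prop :=
  exists (n : nat) (x y : 'I_n -> A),
    (forall k, J (x k) /\ K (y k)) /\ a = \sum_(k < n) x k * y k.

Definition gaussian (A : comNzRingType) : Prop :=
  forall (f g : {poly A}) (a : A),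
    content (f * g) a <-> ideal_prod (content f) (content g) a.

Record ideal (R : comNzRingType) := Ideal {
  ideal_pred :> {pred R};
  ideal_is_ideal : is_ideal ideal_pred }.

(* The amalgamated duplication R |><| I = {(r, r + i) : r in R, i in I}, a
   subring of R x R. *)
Section Amalg.
Variables (R : comNzRingType) (J : ideal R).
Let I : {pred R} := J.

Definition amalg_pred : {pred R * R} := [pred x | x.2 - x.1 \in I].

Lemma amalg_subring : subring_closed amalg_pred.
Proof.
case: (ideal_is_ideal J) => I0 IB IM; split.
- by rewrite inE /= subrr.
- move=> [a b] [c d]; rewrite !inE /= => h1 h2.
  have -> : b - d - (a - c) = (b - a) - (d - c) by ring.
  exact: IB.
- move=> [a b] [c d]; rewrite !inE /= => h1 h2.
  have -> : b * d - a * c = b * (d - c) - (- (c * (b - a))).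
    by ring.
  apply: (IB); first exact: IM.
  have -> : - (c * (b - a)) = 0 - c * (b - a) by rewrite sub0r.
  by apply: (IB) => //; apply: (IM).
Qed.

HB.instance Definition _ := GRing.isSubringClosed.Build (R * R)%type amalg_pred
  amalg_subring.

Record amalg := Amalg { amalg_val : R * R; _ : amalg_val \in amalg_pred }.

HB.instance Definition _ := [isSub for amalg_val].
HB.instance Definition _ := [Choice of amalg by <:].
HB.instance Definition _ := [SubChoice_isSubComNzRing of amalg by <:].
End Amalg.

(* Main.v *)
Require Import Defs.
From HB Require Import structures.
From mathcomp Require Import all_boot all_order all_algebra.
From mathcomp Require Import ring zify.
From Stdlib Require Import ClassicalEpsilon.
Import GRing.Theory.
Local Open Scope ring_scope.

Section Pure.
Variables (R : comNzRingType) (I : ideal R).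

Lemma I0 : (0 : R) \in I. Proof. by case: (ideal_is_ideal I). Qed.
Lemma IB x y : x \in I -> y \in I -> x - y \in I.
Proof. by case: (ideal_is_ideal I) => _ h _; apply: h. Qed.
Lemma IM r x : x \in I -> r * x \in I.
Proof. by case: (ideal_is_ideal I) => _ _ h; apply: h. Qed.
Lemma ID x y : x \in I -> y \in I -> x + y \in I.
Proof.
move=> hx hy; have -> : x + y = x - (0 - y) by rewrite sub0r opprK.
by apply: IB => //; apply: IB => //; exact: I0.
Qed.

Definition Nred (a : R) : {pred R^o} := fun x =>
  if excluded_middle_informative (exists r : R, x = r * a) then true else false.

Lemma NredP a x : x \in Nred a <-> exists r : R, x = r * a.
Proof.
rewrite unfold_in /Nred; case: excluded_middle_informative => //.
Qed.

Lemma pure_fix : pure_ideal I -> forall a : R, a \in I -> exists2 e, e \in I & e * a = a.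
Proof.
move=> [_ hfl] a aI.
have hsub : is_submodule (Nred a).
  split.
  - by apply/NredP; exists 0; rewrite mul0r.
  - move=> x y /NredP [r1 ->] /NredP [r2 ->]; apply/NredP; exists (r1 - r2).
    by rewrite mulrBl.
  - move=> r x /NredP [r1 ->]; apply/NredP; exists (r * r1).
    change (r * (r1 * a) = r * r1 * a :> R); exact: mulrA.
have aN : (a : R^o) \in Nred a by apply/NredP; exists 1; rewrite mul1r.
have aIM : ideal_smul I [pred x : R^o | true] (a : R^o).
  exists 1%N, (fun _ => a), (fun _ => (1 : R^o)); split => //.
  by rewrite big_ord1; rewrite /GRing.scale /= mulr1.
have [n [c [x [hcx ha]]]] := hfl _ _ hsub a aN aIM.
pose P := fun y : R^o => exists2 b, b \in I & y = b * a.
have : P (\sum_(k < n) c k *: x k).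
  apply: (big_ind P).
  - by exists 0; [exact: I0|rewrite mul0r].
  - move=> y z [b1 h1 ->] [b2 h2 ->]; exists (b1 + b2); first exact: ID.
    by rewrite mulrDl.
  - move=> k _; case: (hcx k) => ck /NredP [r ->].
    exists (r * c k); first exact: IM.
    by rewrite /GRing.scale /= mulrA [r * _]mulrC.
move=> [b bI hb]; exists b => //; by rewrite -hb ha.
Qed.

Lemma purify : pure_ideal I -> forall n (d : nat -> R), (forall m, d m \in I) ->
  exists2 e, e \in I & forall m, (m < n)%N -> e * d m = d m.
Proof.
move=> hp; elim=> [|n IH] d hd.
  by exists 0 => //; exact: I0.
have [e1 h1 he1] := IH d hd.
have [e2 h2 he2] := pure_fix hp _ (hd n).
exists (e1 + e2 - e1 * e2); first by apply: IB; [exact: ID|exact: IM].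
move=> m; rewrite ltnS leq_eqVlt => /orP [/eqP ->|hm].
  have -> : (e1 + e2 - e1 * e2) * d n = e1 * d n + e2 * d n - e1 * (e2 * d n) by ring.
  by rewrite he2 addrAC subrr add0r.
have -> : (e1 + e2 - e1 * e2) * d m = e1 * d m + e2 * d m - e2 * (e1 * d m) by ring.
by rewrite he1 // addrK.
Qed.
End Pure.
Section Cont.
Variable A : comNzRingType.

Definition cont (p : {poly A}) (a : A) :=
  exists w : nat -> A, a = \sum_(i < size p) w i * p`_i.

Lemma sum_trunc (p : {poly A}) m (w : nat -> A) :
  \sum_(i < m) w i * p`_i =
  \sum_(i < size p) (if (i < m)%N then w i else 0) * p`_i.
Proof.
pose N := maxn m (size p).
transitivity (\sum_(i < N) (if (i < m)%N then w i else 0) * p`_i).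
  rewrite (big_ord_widen N (fun i => w i * p`_i) (leq_maxl m (size p))) big_mkcond /=.
  by apply: eq_bigr => i _; case: ifP => _ //; rewrite mul0r.
rewrite (big_ord_widen N (fun i => (if (i < m)%N then w i else 0) * p`_i) (leq_maxr m (size p))) [RHS]big_mkcond /=.
apply: eq_bigr => i _; have [//|h] := ltnP i (size p); by rewrite nth_default ?mulr0.
Qed.

Lemma cont_any p m (w : nat -> A) : cont p (\sum_(i < m) w i * p`_i).
Proof. by exists (fun i => if (i < m)%N then w i else 0); apply: sum_trunc. Qed.

Lemma cont0 p : cont p 0.
Proof. by exists (fun _ => 0); rewrite big1 // => i _; rewrite mul0r. Qed.

Lemma contD p a b : cont p a -> cont p b -> cont p (a + b).
Proof.
move=> [w1 ->] [w2 ->]; exists (fun i => w1 i + w2 i).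
by rewrite -big_split /=; apply: eq_bigr => i _; rewrite mulrDl.
Qed.

Lemma contM p r a : cont p a -> cont p (r * a).
Proof.
move=> [w ->]; exists (fun i => r * w i).
by rewrite mulr_sumr; apply: eq_bigr => i _; rewrite mulrA.
Qed.

Lemma cont_sum p n (F : 'I_n -> A) : (forall k, cont p (F k)) ->
  cont p (\sum_(k < n) F k).
Proof.
move=> h; apply: (big_ind (cont p)) => //; [exact: cont0|exact: contD].
Qed.

Lemma cont_coef p k : cont p p`_k.
Proof.
have := cont_any p k.+1 (fun i => (i == k)%:R).
rewrite big_ord_recr /= eqxx mul1r big1 ?add0r // => i _.
by rewrite (ltn_eqF (ltn_ord i)) mul0r.
Qed.

Lemma cont_content p a : cont p a <-> content p a.
Proof.
split.
  move=> [w ->]; exists (fun k => w (val k)); by [].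
move=> [u ->]; exists (fun i => oapp u 0 (insub i)).
by apply: eq_bigr => i _; rewrite valK.
Qed.

Section IP.
Variables J K : A -> Prop.
Lemma iprod0 : ideal_prod J K 0.
Proof. by exists 0%N, (fun _ => 0), (fun _ => 0); split; [case|rewrite big_ord0]. Qed.

Lemma iprod1 x y : J x -> K y -> ideal_prod J K (x * y).
Proof.
move=> hx hy; exists 1%N, (fun _ => x), (fun _ => y); split => //.
by rewrite big_ord1.
Qed.

Lemma iprodD a b : ideal_prod J K a -> ideal_prod J K b -> ideal_prod J K (a + b).
Proof.
move=> [n1 [x1 [y1 [h1 ->]]]] [n2 [x2 [y2 [h2 ->]]]].
exists (n1 + n2)%N,
  (fun k => match split k with inl i => x1 i | inr j => x2 j end),
  (fun k => match split k with inl i => y1 i | inr j => y2 j end).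
split.
  by move=> k; case: (split k).
rewrite big_split_ord /=; congr (_ + _); apply: eq_bigr => i _.
  by rewrite (unsplitK (inl i)).
by rewrite (unsplitK (inr i)).
Qed.

Lemma iprod_sum n (F : 'I_n -> A) : (forall k, ideal_prod J K (F k)) ->
  ideal_prod J K (\sum_(k < n) F k).
Proof.
move=> h; apply: (big_ind (ideal_prod J K)) => //; [exact: iprod0|exact: iprodD].
Qed.
End IP.

Lemma easy_dir (f g : {poly A}) a :
  content (f * g) a -> ideal_prod (content f) (content g) a.
Proof.
move/cont_content => [w ->]; apply: iprod_sum => k.
rewrite coefM mulr_sumr; apply: iprod_sum => j.
rewrite mulrA; apply: iprod1; apply/cont_content.
  exact/contM/cont_coef.
exact: cont_coef.
Qed.

Definition gauss_coef := forall (f g : {poly A}) i j, cont (f * g) (f`_i * g`_j).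

Lemma gaussianP : gaussian A <-> gauss_coef.
Proof.
split.
  move=> hG f g i j; apply/cont_content/hG.
  by apply: iprod1; apply/cont_content/cont_coef.
move=> hG f g a; split; first exact: easy_dir.
move=> [n [x [y [h ->]]]]; apply/cont_content; apply: cont_sum => k.
case: (h k) => /cont_content [u ->] /cont_content [v ->].
rewrite mulr_suml; apply: cont_sum => i; rewrite mulr_sumr; apply: cont_sum => j.
have -> : u i * f`_i * (v j * g`_j) = (u i * v j) * (f`_i * g`_j) by ring.
exact/contM/hG.
Qed.
End Cont.
Section Am.
Variables (R : comNzRingType) (I : ideal R).
Local Notation AI := (amalg I).
Definition p1 : {rmorphism AI -> R} := (fst \o val).
Definition p2 : {rmorphism AI -> R} := (snd \o val).

Lemma p10 : p1 (0 : AI) = 0. Proof. exact: rmorph0. Qed.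
Lemma p20 : p2 (0 : AI) = 0. Proof. exact: rmorph0. Qed.

Lemma mapM (q : {rmorphism AI -> R}) (P Q : {poly AI}) :
  map_poly q (P * Q) = map_poly q P * map_poly q Q.
Proof. exact: (map_poly_is_monoid_morphism q).2. Qed.

Lemma amalg_eq (x y : AI) : p1 x = p1 y -> p2 x = p2 y -> x = y.
Proof.
move=> h1 h2; apply: val_inj; move: h1 h2; rewrite /p1 /p2 /=.
by case: (val x) => ? ?; case: (val y) => ? ? /= -> ->.
Qed.

Lemma p21 (x : AI) : p2 x - p1 x \in I.
Proof. by case: x => [[r s] h]. Qed.

Definition mk (r s : R) (h : s - r \in I) : AI := @Amalg R I (r, s) h.
Lemma p1mk r s h : p1 (@mk r s h) = r. Proof. by []. Qed.
Lemma p2mk r s h : p2 (@mk r s h) = s. Proof. by []. Qed.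

Lemma dir1 : gauss_coef AI -> gauss_coef R.
Proof.
move=> hG f g i j.
have hd : forall r : R, r - r \in I by move=> r; rewrite subrr; exact: I0.
pose dg r := @mk r r (hd r).
pose F := \poly_(k < size f) dg f`_k.
pose G := \poly_(k < size g) dg g`_k.
have eF : map_poly p1 F = f.
  apply/polyP => k; rewrite coef_map coef_poly.
  by case: ltnP => h //; rewrite nth_default //; exact: p10.
have eG : map_poly p1 G = g.
  apply/polyP => k; rewrite coef_map coef_poly.
  by case: ltnP => h //; rewrite nth_default //; exact: p10.
have [w hw] := hG F G i j.
have := congr1 p1 hw; rewrite rmorphM rmorph_sum.
rewrite -(coef_map p1 F) -(coef_map p1 G) eF eG => ->.
rewrite (eq_bigr (fun k : 'I_(size (F * G)) => p1 (w k) * (f * g)`_k)).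
  exact: (cont_any _ (f * g) _ (fun n => p1 (w n))).
by move=> k _; rewrite rmorphM -(coef_map p1 (F * G)) mapM eF eG.
Qed.

Lemma dir2 : pure_ideal I -> gauss_coef R -> gauss_coef AI.
Proof.
move=> hp hG F G i j.
pose f := map_poly p1 F; pose h := map_poly p2 F.
pose g := map_poly p1 G; pose h' := map_poly p2 G.
have [a ha] := hG f g i j.
have [b hb] := hG h h' i j.
pose d m := if (m < size F)%N then p2 F`_m - p1 F`_m
            else p2 G`_(m - size F) - p1 G`_(m - size F).
have hdI : forall m, d m \in I by move=> m; rewrite /d; case: ifP => _; exact: p21.
have [e eI he] := @purify R I hp (size F + size G)%N d hdI.
have key : forall (P : {poly AI}) (q1 q2 : R),
   (forall m, e * (p2 P`_m - p1 P`_m) = p2 P`_m - p1 P`_m) ->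
   forall m, (1 - e) * (map_poly p2 P)`_m = (1 - e) * (map_poly p1 P)`_m.
  move=> P _ _ hP m; rewrite !coef_map.
  have -> : (1 - e) * p2 P`_m = (1 - e) * p1 P`_m
     + ((p2 P`_m - p1 P`_m) - e * (p2 P`_m - p1 P`_m)) by ring.
  by rewrite hP subrr addr0.
have hF : forall m, (1 - e) * h`_m = (1 - e) * f`_m.
  apply: (key F 0 0) => m; case: (ltnP m (size F)) => hm.
    by have := he m (ltn_addr _ hm); rewrite /d hm.
  by rewrite nth_default // p10 p20 subrr mulr0.
have hG' : forall m, (1 - e) * h'`_m = (1 - e) * g`_m.
  apply: (key G 0 0) => m; case: (ltnP m (size G)) => hm.
    have := he (size F + m)%N; rewrite ltn_add2l => /(_ hm).
    by rewrite /d ltnNge leq_addr /= addKn.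
  by rewrite nth_default // p10 p20 subrr mulr0.
have hprod : forall x y x' y' : R,
   (1 - e) * x = (1 - e) * x' -> (1 - e) * y = (1 - e) * y' ->
   (1 - e) * (x * y) = (1 - e) * (x' * y').
  move=> x y x' y' h1 h2.
  have -> : (1 - e) * (x * y) = ((1 - e) * x) * y by ring.
  rewrite h1.
  have -> : (1 - e) * x' * y = x' * ((1 - e) * y) by ring.
  by rewrite h2; ring.
have hX : forall k, (1 - e) * (h * h')`_k = (1 - e) * (f * g)`_k.
  move=> k; rewrite !coefM !mulr_sumr; apply: eq_bigr => l _.
  exact: hprod.
pose N := addn (addn (size (F * G)) (size (f * g))) (size (h * h')).
have hgam : forall k, (a k + e * (b k - a k)) - a k \in I.
  by move=> k; rewrite addrC addKr mulrC; apply: IM.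
pose gam k := @mk (a k) (a k + e * (b k - a k)) (hgam k).
suff -> : F`_i * G`_j = \sum_(k < N) gam k * (F * G)`_k by exact: cont_any.
have widen : forall (p : {poly R}) (w : nat -> R), (size p <= N)%N ->
    \sum_(k < size p) w k * p`_k = \sum_(k < N) w k * p`_k.
  move=> p w hN; rewrite [RHS]sum_trunc; apply: eq_bigr => k _.
  by rewrite (leq_trans (ltn_ord k) hN).
have p1g : forall k, p1 (gam k) = a k by [].
have p2g : forall k, p2 (gam k) = a k + e * (b k - a k) by [].
apply: amalg_eq.
  rewrite rmorphM rmorph_sum -(coef_map p1 F) -(coef_map p1 G) -/f -/g ha widen;
    last by rewrite /N; lia.
  apply: eq_bigr => k _.
  by rewrite rmorphM p1g -(coef_map p1 (F * G)) mapM.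
rewrite rmorphM rmorph_sum -(coef_map p2 F) -(coef_map p2 G) -/h -/h'.
rewrite (eq_bigr (fun k : 'I_N => (a k + e * (b k - a k)) * (h * h')`_k)); last first.
  by move=> k _; rewrite rmorphM p2g -(coef_map p2 (F * G)) mapM.
transitivity (\sum_(k < N) (a k * ((1 - e) * (f * g)`_k) + e * (b k * (h * h')`_k))).
  2: by apply: eq_bigr => k _; rewrite -hX; ring.
rewrite big_split /= -mulr_sumr -widen; last by rewrite /N; lia.
rewrite -hb.
under eq_bigr => k _ do rewrite mulrA [a k * _]mulrC -mulrA.
rewrite -mulr_sumr -widen; last by rewrite /N; lia.
rewrite -ha.
have : (1 - e) * (f`_i * g`_j) = (1 - e) * (h`_i * h'`_j).
  by apply: hprod; rewrite ?hF ?hG'.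
move=> ->; ring.
Qed.
End Am.

Theorem corollary2p6 (R : comNzRingType) (I : ideal R) :
  reduced R -> pure_ideal I ->
  (gaussian R <-> gaussian (amalg I)).
Proof.
move=> _ hp; rewrite !gaussianP; split.
  exact: dir2.
exact: dir1.
Qed.
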